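(* Let $k\ge 4$ be an integer, let $G'$ be an acyclic oriented graph with no directed path with $k$ arcs, and let $W$ be an oriented path in $G'$. Then: (1) if $W$ has exactly $kn$ arcs for some positive integer $n$, then $|W^+|\le (k-1)n$ and $|W^-|\ge n$; (2) if the final arc of $W$ is a backward arc, then there is a positive integer $n$ such that $|W^+|\le (k-1)n$ and $|W^-|\ge n$.
   Context: An oriented path $W=w_1w_2\cdots w_t$ in $G'$ is a path in the underlying graph of $G'$ traversed from $w_1$ to $w_t$; an arc of $G'$ between consecutive vertices $w_i,w_{i+1}$ is a forward arc of $W$ if it is $(w_i,w_{i+1})$ and a backward arc if it is $(w_{i+1},w_i)$. $W^+$ and $W^-$ denote the sets of forward and backward arcs of $W$, respectively; the final arc is the one between $w_{t-1}$ and $w_t$. *)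

(* Defs.v *)
From mathcomp Require Import all_boot.
Set Implicit Arguments. Unset Strict Implicit. Unset Printing Implicit Defensive.

(* A (finite) digraph is a relation e on a finType T: e x y means arc (x,y). *)

Definition oriented (T : finType) (e : rel T) : Prop :=
  forall x y : T, ~~ (e x y && e y x) /\ ~~ e x x.

Definition acyclic (T : finType) (e : rel T) : Prop :=
  forall (x : T) (s : seq T), path e x s -> ~~ e (last x s) x.

Definition dipath_with_arcs (T : finType) (e : rel T) (k : nat) (x : T) (s : seq T) : Prop :=
  [/\ uniq (x :: s), size s = k & path e x s].

Definition no_dipath_with_arcs (T : finType) (e : rel T) (k : nat) : Prop :=
  forall (x : T) (s : seq T), ~ dipath_with_arcs e k x s.

Definition steps (T : Type) (W : seq T) : seq (T * T) := zip W (behead W).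

Definition oriented_path (T : finType) (e : rel T) (W : seq T) : Prop :=
  [/\ 0 < size W, uniq W & all (fun p => e p.1 p.2 || e p.2 p.1) (steps W)].

Definition n_arcs (T : Type) (W : seq T) : nat := size (steps W).

Definition n_forward (T : finType) (e : rel T) (W : seq T) : nat :=
  count (fun p => e p.1 p.2) (steps W).
Definition n_backward (T : finType) (e : rel T) (W : seq T) : nat :=
  count (fun p => e p.2 p.1) (steps W).

Definition final_arc_backward (T : finType) (e : rel T) (W : seq T) : Prop :=
  exists (s : seq T) (a b : T), W = rcons (rcons s a) b /\ e b a.

(* Main.v *)
Require Import Defs.
From mathcomp Require Import all_boot zify.

Definition noK k (f : seq bool) := forall p q, f <> p ++ nseq k true ++ q.

Lemma noK_suffix k p f : noK k (p ++ f) -> noK k f.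
Proof. move=> H p' q E; apply: (H (p ++ p') q); by rewrite E catA. Qed.

Lemma noK_prefix k r f : noK k (f ++ r) -> noK k f.
Proof. move=> H p' q E; apply: (H p' (q ++ r)); by rewrite E -!catA. Qed.

Lemma all_true_nseq f : all id f -> f = nseq (size f) true.
Proof.
elim: f => //= b f IH /andP[Hb Hf]; rewrite {1}(IH Hf); by case: b Hb.
Qed.

Lemma block k f : noK k f -> size f = k -> count id f <= k.-1.
Proof.
move=> H Hs.
have : count id f != size f.
  apply/negP => /eqP Hc.
  have Ha : all id f by rewrite all_count Hc.
  apply: (H [::] [::]); by rewrite cats0 /= -Hs -all_true_nseq.
have := count_size id f; rewrite Hs; lia.
Qed.

Lemma partA k f n : noK k f -> size f = k * n -> count id f <= k.-1 * n.
Proof.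
elim: n f => [|n IH] f Hk Hs.
  by move: Hs; rewrite muln0 => /size0nil ->.
rewrite -(cat_take_drop k f) count_cat.
have Hsz : k <= size f by rewrite Hs mulnS leq_addr.
have Hk' : noK k (take k f ++ drop k f) by rewrite cat_take_drop.
have H1 := @block k (take k f) (@noK_prefix k (drop k f) (take k f) Hk') (size_takel Hsz).
have Hs' : size (drop k f) = k * n by rewrite size_drop Hs mulnS addKn.
have H2 := IH (drop k f) (@noK_suffix k (take k f) (drop k f) Hk') Hs'.
rewrite mulnS; lia.
Qed.

Lemma split_false f : false \in f -> exists t r, f = nseq t true ++ false :: r.
Proof.
elim: f => // b f IH; case: b.
  rewrite in_cons /= => /IH [t [r ->]]; by exists t.+1, r.
move=> _; by exists 0, f.
Qed.

Lemma count_nseq_true t : count id (nseq t true) = t.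
Proof. by elim: t => //= t ->. Qed.
Lemma count_nseq_negb t : count negb (nseq t true) = 0.
Proof. by elim: t. Qed.

Lemma partB k f : noK k f -> last false f = false -> count id f <= k.-1 * count negb f.
Proof.
move: {2}(size f) (leqnn (size f)) => m; elim: m f => [|m IH] f Hm Hk Hl.
  by move: Hm; rewrite leqn0 => /eqP/size0nil ->.
have [->|Hf] : f = [::] \/ false \in f.
  case/lastP: f Hm Hk Hl => [|s x] _ _; first by left.
  rewrite last_rcons => ->; right; by rewrite mem_rcons mem_head.
  by [].
case: (@split_false f Hf) => t [r E].
have Ht : t < k.
  rewrite ltnNge; apply/negP => Hkt.
  apply: (Hk [::] (nseq (t - k) true ++ false :: r)).
  by rewrite E /= catA -nseqD subnKC.
have Hr : noK k r.
  apply: (@noK_suffix k (nseq t true ++ [:: false])); by rewrite -catA -E.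
have Hlr : last false r = false by move: Hl; rewrite E last_cat.
have Hsr : size r <= m by move: Hm; rewrite E size_cat /=; lia.
have := IH r Hsr Hr Hlr.
rewrite E !count_cat /= count_nseq_true count_nseq_negb add0n add1n mulnS.
lia.
Qed.

Lemma size_steps (T : Type) (W : seq T) : size (steps W) = (size W).-1.
Proof. rewrite /steps size_zip size_behead; lia. Qed.

Lemma bridge (T : finType) (e : rel T) W k : 0 < k -> uniq W -> no_dipath_with_arcs e k ->
  noK k (map (fun p => e p.1 p.2) (steps W)).
Proof.
move=> Hk U N p q E.
rewrite /no_dipath_with_arcs /dipath_with_arcs in N.
have Hsf : size (map (fun p => e p.1 p.2) (steps W)) = size p + k + size q
  by rewrite E !size_cat size_nseq addnA.
have x0 : T.
  case: W U E Hsf => [|x W'] _ _ /=; [move=> H; exfalso; lia | move=> _; exact x].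
have HW : 0 < size W.
  by case: W U E Hsf => [|x W'] _ _ //=; lia.
set f := map _ _ in E Hsf.
have HsW : size W = (size f).+1 by rewrite size_map size_steps prednK.
set i := size p.
have Hi : i = size p := erefl.
have hf : forall j, j < k -> e (nth x0 W (i + j)) (nth x0 W (i + j).+1).
  move=> j hj.
  have : nth false f (i + j) = true.
    by rewrite E nth_cat ltnNge leq_addr /= addKn nth_cat size_nseq hj nth_nseq hj.
  have hlt : i + j < size (steps W) by rewrite -(size_map (fun p => e p.1 p.2)) -/f; lia.
  rewrite /f (nth_map (x0, x0)) // /steps nth_zip_cond.
  rewrite -/(steps W) hlt /=.
  by rewrite nth_behead.
have HsW' : @size (Finite.sort T) W = (size f).+1 := HsW.
have hi : i < size W by lia.
case: (N (nth x0 W i) (take k (drop i.+1 W))).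
split.
- have -> : nth x0 W i :: take k (drop i.+1 W) = take k.+1 (drop i W).
    by rewrite (drop_nth x0 hi).
  by rewrite take_uniq // drop_uniq.
- rewrite size_takel // size_drop.
lia.
- apply/(@pathP T e _ _ x0) => j hj.
  rewrite size_takel in hj; last by rewrite size_drop; lia.
  have -> : nth x0 (nth x0 W i :: take k (drop i.+1 W)) j = nth x0 W (i + j).
    case: j hj => [|j] hj /=; first by rewrite addn0.
    rewrite nth_take ?nth_drop ?addSn ?addnS //; exact: ltnW.
  rewrite (nth_take x0 hj) nth_drop addSn.
  exact: hf.
Qed.

Lemma steps_rcons (T : Type) (x : T) t b :
  steps (rcons (x :: t) b) = rcons (steps (x :: t)) (last x t, b).
Proof.
elim: t x => [|y t IH] x //=.
have := IH y; rewrite /steps /= => ->. by [].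
Qed.

Theorem lemma2 (k : nat) (T : finType) (e : rel T) (W : seq T) :
  4 <= k ->
  oriented e -> acyclic e -> no_dipath_with_arcs e k ->
  oriented_path e W ->
  (forall n : nat, 0 < n -> n_arcs W = k * n ->
     n_forward e W <= (k - 1) * n /\ n <= n_backward e W) /\
  (final_arc_backward e W ->
     exists n : nat, 0 < n /\ n_forward e W <= (k - 1) * n /\ n <= n_backward e W).
Proof.
move=> Hk4 Hor Hac HnoK [HW0 U Hall].
have Hk0 : 0 < k by lia.
have Hn := @bridge T e W k Hk0 U HnoK.
set f := map (fun p => e p.1 p.2) (steps W) in Hn.
have Cf : n_forward e W = count id f by rewrite /f count_map.
have Cb : count negb f <= n_backward e W.
  rewrite /f count_map /n_backward.
  elim: (steps W) Hall => //= [[a b] s] IH /andP[Hab Hs] /=.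
  have := IH Hs; case: (e a b) Hab; case: (e b a) => //=; lia.
have Hc : count id f + count negb f = size f := count_predC id f.
have Hsz : size f = n_arcs W by rewrite size_map.
case: k Hk4 Hk0 HnoK Hn => [|k'] // Hk4 Hk0 HnoK Hn.
rewrite subn1 /=.
split.
  move=> n Hn0 Hna.
  have := @partA k'.+1 f n Hn (etrans Hsz Hna); rewrite /=; rewrite mulSn in Hna; lia.
case=> s [a [b [EW Eba]]].
have Hab : e a b = false.
  by case: (Hor a b); rewrite Eba andbT; case: (e a b).
have [f' Ef] : exists f', f = rcons f' false.
  rewrite /f; case: s EW => [|x s] -> /=; first by exists [::]; rewrite Hab.
  rewrite steps_rcons map_rcons last_rcons /= Hab; by eexists.
have Hl : last false f = false by rewrite Ef last_rcons.
have := @partB k'.+1 f Hn Hl.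
have Hpos : 0 < count negb f by rewrite Ef -cats1 count_cat /=; lia.
move=> H; exists (count negb f); split => //; split; lia.
Qed.
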